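(* Let $X,Y\subseteq\mathbb{R}^{\mathbb{Z}_<}$, equipped with the metric $d(\mathbf{x},\mathbf{y})=|\mathbf{y}-\mathbf{x}|$. A function $f:X\to Y$ is $\iota$-continuous if and only if $f$ satisfies $\mathrm{ED}$.
   Context: $\mathbb{R}^{\mathbb{Z}_<}$ is the set of formal series $\sum_{i\ge -k}a_i\epsilon^i$ ($k\in\mathbb{N}\cup\{0\}$, $a_i\in\mathbb{R}$), with coefficientwise addition, Cauchy-product multiplication and lexicographic order; $|\cdot|$ is the associated absolute value. For $m\in\mathbb{N}\cup\{0\}$ let $\Delta^m=\{a\epsilon^m:a\in\mathbb{R}\}$ (with $a\ne0$ when $m\ge1$) and $\Delta^{\downarrow m}=\bigcup_{n\ge m}\Delta^n$. In a subset $Z$, $B_{\mathbf{x}}(\mathbf{r})=\{\mathbf{z}\in Z:d(\mathbf{x},\mathbf{z})<\mathbf{r}\}$, and $O\subseteq Z$ is $\iota$-open iff for every $\mathbf{x}\in O$ there is a positive $\iota\in\Delta^{\downarrow m}$ (some $m$) with $B_{\mathbf{x}}(\iota)\subseteq O$. $f$ is $\iota$-continuous iff $f^{-1}(U)$ is $\iota$-open in $X$ whenever $U\subseteq Y$ is $\iota$-open. $f$ satisfies $\mathrm{ED}$ iff at every $\mathbf{c}\in X$, for every positive $\iota_1\in\mathbb{R}^{\mathbb{Z}_<}$ there is a positive $\iota_2\in\mathbb{R}^{\mathbb{Z}_<}$ with $|f(\mathbf{x})-f(\mathbf{c})|<\iota_1$ whenever $\mathbf{x}\in X$ and $|\mathbf{x}-\mathbf{c}|<\iota_2$.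 *)

(* Defs.v *)
From Stdlib Require Import Reals ZArith Lia Lra ClassicalEpsilon.
Open Scope R_scope.

(* R^{Z_<}: formal series sum_{i >= -k} a_i eps^i, represented by the
   coefficient function Z -> R, vanishing below some index. *)
Record LS := mkLS {
  coef : Z -> R ;
  coef_lb : exists k : Z, forall i : Z, (i < k)%Z -> coef i = 0
}.

Definition ls_zero : LS.
Proof. refine (mkLS (fun _ => 0) _). exists 0%Z. reflexivity. Defined.

Definition ls_add (x y : LS) : LS.
Proof.
  refine (mkLS (fun i => coef x i + coef y i) _).
  destruct (coef_lb x) as [k1 H1]; destruct (coef_lb y) as [k2 H2].
  exists (Z.min k1 k2). intros i Hi.
  rewrite H1 by lia. rewrite H2 by lia. ring.
Defined.

Definition ls_opp (x : LS) : LS.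
Proof.
  refine (mkLS (fun i => - coef x i) _).
  destruct (coef_lb x) as [k H]. exists k. intros i Hi. rewrite H by lia. ring.
Defined.

Definition ls_sub (x y : LS) : LS := ls_add x (ls_opp y).

Definition ls_lt (x y : LS) : Prop :=
  exists n : Z, (forall i : Z, (i < n)%Z -> coef x i = coef y i) /\ coef x n < coef y n.

Definition ls_abs (x : LS) : LS :=
  if excluded_middle_informative (ls_lt x ls_zero) then ls_opp x else x.

Definition ls_dist (x y : LS) : LS := ls_abs (ls_sub y x).

Definition in_Delta (m : nat) (r : LS) : Prop :=
  exists a : R, ((1 <= m)%nat -> a <> 0) /\
    forall j : Z, coef r j = (if Z.eq_dec j (Z.of_nat m) then a else 0).

Definition in_Delta_down (m : nat) (r : LS) : Prop :=
  exists n : nat, (m <= n)%nat /\ in_Delta n r.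

Definition ball (Zs : LS -> Prop) (x r : LS) : LS -> Prop :=
  fun z => Zs z /\ ls_lt (ls_dist x z) r.

Definition iota_open (Zs O : LS -> Prop) : Prop :=
  (forall x, O x -> Zs x) /\
  forall x, O x -> exists (m : nat) (r : LS),
      in_Delta_down m r /\ ls_lt ls_zero r /\ (forall z, ball Zs x r z -> O z).

Definition iota_continuous (X Y : LS -> Prop) (f : LS -> LS) : Prop :=
  forall U : LS -> Prop, iota_open Y U -> iota_open X (fun x => X x /\ U (f x)).

Definition ED (X : LS -> Prop) (f : LS -> LS) : Prop :=
  forall c, X c -> forall r1 : LS, ls_lt ls_zero r1 ->
    exists r2 : LS, ls_lt ls_zero r2 /\
      forall x, X x -> ls_lt (ls_abs (ls_sub x c)) r2 ->
        ls_lt (ls_abs (ls_sub (f x) (f c))) r1.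

(* Main.v *)
Require Import Defs.
From Stdlib Require Import Reals ZArith.
From Stdlib Require Import Lia Lra ClassicalEpsilon.
Open Scope R_scope.

Definition epsN (N : nat) : LS.
Proof.
  refine (mkLS (fun j => if Z.eq_dec j (Z.of_nat N) then 1 else 0) _).
  exists (Z.of_nat N). intros i Hi. destruct (Z.eq_dec i (Z.of_nat N)); [lia|reflexivity].
Defined.

Lemma epsN_pos N : ls_lt ls_zero (epsN N).
Proof.
  exists (Z.of_nat N). split.
  - intros i Hi. simpl. destruct (Z.eq_dec i (Z.of_nat N)); [lia|reflexivity].
  - simpl. destruct (Z.eq_dec (Z.of_nat N) (Z.of_nat N)); [lra|lia].
Qed.

Lemma epsN_delta N : in_Delta_down N (epsN N).
Proof.
  exists N. split; [lia|]. exists 1. split; [intros; lra|]. intros j. reflexivity.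
Qed.

Lemma abs_coef w : (forall i, coef (ls_abs w) i = coef w i) \/
                   (forall i, coef (ls_abs w) i = - coef w i).
Proof.
  unfold ls_abs. destruct (excluded_middle_informative (ls_lt w ls_zero)).
  - right. intros i. reflexivity.
  - left. intros i. reflexivity.
Qed.

Lemma abs_nonneg w : ~ ls_lt (ls_abs w) ls_zero.
Proof.
  unfold ls_abs. destruct (excluded_middle_informative (ls_lt w ls_zero)) as [H|H].
  - intros [m [Hm1 Hm2]]. destruct H as [n [Hn1 Hn2]]. simpl in *.
    destruct (Z.lt_trichotomy n m) as [Hl|[He|Hl]].
    + specialize (Hm1 n Hl). lra.
    + subst. lra.
    + specialize (Hn1 m Hl). lra.
  - exact H.
Qed.

Lemma lemA w N : ls_lt (ls_abs w) (epsN N) -> forall i, (i < Z.of_nat N)%Z -> coef w i = 0.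
Proof.
  intros Hlt.
  assert (H : forall i, (i < Z.of_nat N)%Z -> coef (ls_abs w) i = 0).
  { destruct Hlt as [n [Hn1 Hn2]]. intros i Hi.
    destruct (Z_lt_le_dec i n) as [Hin|Hin].
    - rewrite Hn1 by exact Hin. simpl. destruct (Z.eq_dec i (Z.of_nat N)); [lia|reflexivity].
    - exfalso. apply (abs_nonneg w). exists n. split.
      + intros j Hj. rewrite Hn1 by exact Hj. simpl.
        destruct (Z.eq_dec j (Z.of_nat N)); [lia|reflexivity].
      + simpl in *. destruct (Z.eq_dec n (Z.of_nat N)); [lia|lra]. }
  intros i Hi. specialize (H i Hi).
  destruct (abs_coef w) as [E|E]; rewrite E in H; lra.
Qed.

Lemma lemB w r n0 N : (forall i, (i < N)%Z -> coef w i = 0) ->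
  (forall i, (i < n0)%Z -> coef ls_zero i = coef r i) -> coef ls_zero n0 < coef r n0 ->
  (n0 < N)%Z -> ls_lt (ls_abs w) r.
Proof.
  intros Hw H1 H2 Hn. simpl in *.
  assert (Ha : forall i, (i < N)%Z -> coef (ls_abs w) i = 0).
  { intros i Hi. destruct (abs_coef w) as [E|E]; rewrite E, Hw by exact Hi; lra. }
  exists n0. split.
  - intros i Hi. rewrite Ha by lia. apply H1; exact Hi.
  - rewrite Ha by exact Hn. exact H2.
Qed.

Theorem mainTheorem14 (X Y : LS -> Prop) (f : LS -> LS)
  (Hf : forall x, X x -> Y (f x)) :
  iota_continuous X Y f <-> ED X f.
Proof.
  split.
  - intros Hc c Xc r1 [n0 [H1 H2]].
    set (N := Z.to_nat (n0 + 1)).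
    assert (HN : (n0 < Z.of_nat N)%Z) by (unfold N; lia).
    set (U := fun y => Y y /\ forall i, (i < Z.of_nat N)%Z -> coef y i = coef (f c) i).
    assert (HU : iota_open Y U).
    { split.
      - intros y [Hy _]; exact Hy.
      - intros y [Hy Hyc]. exists N, (epsN N). split; [apply epsN_delta|].
        split; [apply epsN_pos|]. intros z [Yz Hz]. split; [exact Yz|].
        intros i Hi. pose proof (lemA _ _ Hz i Hi) as E. simpl in E.
        rewrite <- Hyc by exact Hi. lra. }
    destruct (Hc U HU) as [_ Ho].
    destruct (Ho c (conj Xc (conj (Hf c Xc) (fun i _ => eq_refl)))) as [m [r [_ [Hr Hb]]]].
    exists r. split; [exact Hr|]. intros x Xx Hx.
    destruct (Hb x (conj Xx Hx)) as [_ [_ Hfx]].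
    apply (lemB _ _ n0 (Z.of_nat N)); auto.
    intros i Hi. simpl. rewrite Hfx by exact Hi. lra.
  - intros Hed U [HUY HU]. split.
    + intros x [Xx _]; exact Xx.
    + intros x [Xx Ux]. destruct (HU (f x) Ux) as [m [r [Hd [Hr Hb]]]].
      destruct (Hed x Xx r Hr) as [r2 [[n0 [H1 H2]] Hr2]].
      set (N := Z.to_nat (n0 + 1)).
      assert (HN : (n0 < Z.of_nat N)%Z) by (unfold N; lia).
      exists N, (epsN N). split; [apply epsN_delta|]. split; [apply epsN_pos|].
      intros z [Xz Hz]. split; [exact Xz|]. apply Hb. split; [apply Hf; exact Xz|].
      apply Hr2; [exact Xz|].
      apply (lemB _ _ n0 (Z.of_nat N)); auto.
      apply lemA. exact Hz.
Qed.
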